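(* Let $\mathbf{A}=\langle A,\wedge,\vee,\cdot,1,0,{\sim},-,'\rangle$ be a quasi relation algebra. For $n\in\omega$ and $a\in A$ define $a^{\triangledown n}={\sim}^{2n}(a')$ and $a^{\vartriangle n}=-^{2n}(a')$. Then $\mathbf{A}^{\triangledown n}=\langle A,\wedge,\vee,\cdot,1,0,{\sim},-,{}^{\triangledown n}\rangle$ and $\mathbf{A}^{\vartriangle n}=\langle A,\wedge,\vee,\cdot,1,0,{\sim},-,{}^{\vartriangle n}\rangle$ are quasi relation algebras.
   Context: An FL-algebra $\langle A,\wedge,\vee,\cdot,1,\backslash,/,0\rangle$ is a residuated lattice (a lattice $\langle A,\wedge,\vee\rangle$, a monoid $\langle A,\cdot,1\rangle$, with $a\cdot b\le c \iff a\le c/b\iff b\le a\backslash c$) together with an arbitrary constant $0$. Define ${\sim}a=a\backslash 0$, $-a=0/a$ and $a+b={\sim}(-b\cdot -a)$. It is an InFL-algebra if ${\sim}{-}a={-}{\sim}a=a$ for all $a$. A quasi relation algebra (qRA) is an InFL-algebra with a unary operation $'$ such that for all $a,b$: $a''=a$, $(a\vee b)'=a'\wedge b'$, $({\sim}a)'=-(a')$, and $(a\cdot b)'=a'+b'$; it is written in the signature $\langle A,\wedge,\vee,\cdot,1,0,{\sim},-,'\rangle$ (the residuals being determined by this structure). ${\sim}^k a$, $-^k a$ denote $k$-fold applications. *)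

(* Defs.v *)
From Stdlib Require Import Arith.

Record FLops (A : Type) := mkFLops {
  meet : A -> A -> A;
  join : A -> A -> A;
  mul  : A -> A -> A;
  one  : A;
  ldiv : A -> A -> A;
  rdiv : A -> A -> A;
  zero : A
}.
Arguments meet {A} f _ _.
Arguments join {A} f _ _.
Arguments mul {A} f _ _.
Arguments one {A} f.
Arguments ldiv {A} f _ _.
Arguments rdiv {A} f _ _.
Arguments zero {A} f.

Section FL.
Context {A : Type} (o : FLops A).

Definition le (a b : A) : Prop := meet o a b = a.

Definition is_lattice : Prop :=
  (forall a b, meet o a b = meet o b a) /\
  (forall a b, join o a b = join o b a) /\
  (forall a b c, meet o a (meet o b c) = meet o (meet o a b) c) /\
  (forall a b c, join o a (join o b c) = join o (join o a b) c) /\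
  (forall a b, meet o a (join o a b) = a) /\
  (forall a b, join o a (meet o a b) = a).

Definition is_monoid : Prop :=
  (forall a b c, mul o a (mul o b c) = mul o (mul o a b) c) /\
  (forall a, mul o (one o) a = a) /\
  (forall a, mul o a (one o) = a).

Definition is_residuated : Prop :=
  forall a b c,
    (le (mul o a b) c <-> le a (rdiv o c b)) /\
    (le (mul o a b) c <-> le b (ldiv o a c)).

Definition is_FL : Prop := is_lattice /\ is_monoid /\ is_residuated.

Definition sim (a : A) : A := ldiv o a (zero o).
Definition minus (a : A) : A := rdiv o (zero o) a.
Definition plus (a b : A) : A := sim (mul o (minus b) (minus a)).

Definition is_InFL : Prop :=
  is_FL /\ forall a, sim (minus a) = a /\ minus (sim a) = a.

Definition is_qRA (pr : A -> A) : Prop :=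
  is_InFL /\
  forall a b,
    pr (pr a) = a /\
    pr (join o a b) = meet o (pr a) (pr b) /\
    pr (sim a) = minus (pr a) /\
    pr (mul o a b) = plus (pr a) (pr b).

End FL.

Definition tri_down {A : Type} (o : FLops A) (pr : A -> A) (n : nat) (a : A) : A :=
  Nat.iter (2 * n) (sim o) (pr a).
Definition tri_up {A : Type} (o : FLops A) (pr : A -> A) (n : nat) (a : A) : A :=
  Nat.iter (2 * n) (minus o) (pr a).

(* Main.v *)
Require Import Defs.
From Stdlib Require Import Arith Lia.

Section S.
Context {A : Type} (o : FLops A) (HI : is_InFL o).

Let lat : is_lattice o. Proof. apply HI. Qed.
Let mon : is_monoid o. Proof. apply HI. Qed.
Let res : is_residuated o. Proof. apply HI. Qed.
Let inv : forall a, sim o (minus o a) = a /\ minus o (sim o a) = a. Proof. apply HI. Qed.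

Lemma sm a : sim o (minus o a) = a. Proof. apply inv. Qed.
Lemma ms a : minus o (sim o a) = a. Proof. apply inv. Qed.

Lemma meetC a b : meet o a b = meet o b a. Proof. apply lat. Qed.
Lemma meetA a b c : meet o a (meet o b c) = meet o (meet o a b) c. Proof. apply lat. Qed.
Lemma mulA a b c : mul o a (mul o b c) = mul o (mul o a b) c. Proof. apply mon. Qed.

Lemma le_refl a : le o a a.
Proof.
  unfold le. destruct lat as (_&_&_&_&H5&H6).
  pose proof (H5 a (meet o a a)) as E. rewrite H6 in E. exact E.
Qed.

Lemma le_anti a b : le o a b -> le o b a -> a = b.
Proof. unfold le; intros H1 H2. transitivity (meet o a b); [symmetry; exact H1 | rewrite meetC; exact H2]. Qed.

Lemma le_trans a b c : le o a b -> le o b c -> le o a c.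
Proof.
  unfold le; intros H1 H2. rewrite <- H1 at 1. rewrite <- meetA, H2. exact H1.
Qed.

Lemma le_meet x a b : le o x (meet o a b) <-> le o x a /\ le o x b.
Proof.
  unfold le; split.
  - intro H. split.
    + assert (E: meet o (meet o a b) a = meet o a b).
      { rewrite meetC, meetA. f_equal. apply le_refl. }
      rewrite <- H at 1. rewrite <- meetA, E. exact H.
    + assert (E: meet o (meet o a b) b = meet o a b).
      { rewrite <- meetA. f_equal. apply le_refl. }
      rewrite <- H at 1. rewrite <- meetA, E. exact H.
  - intros [H1 H2]. rewrite meetA, H1. exact H2.
Qed.

Lemma yoneda u v : (forall x, le o x u <-> le o x v) -> u = v.
Proof.
  intro H. apply le_anti; [apply H | apply H]; apply le_refl.
Qed.

Lemma le_sim x y : le o y (sim o x) <-> le o (mul o x y) (zero o).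
Proof. unfold sim. symmetry. apply res. Qed.
Lemma le_minus x y : le o x (minus o y) <-> le o (mul o x y) (zero o).
Proof. unfold minus. symmetry. apply res. Qed.

Lemma G x y : le o y (sim o x) <-> le o x (minus o y).
Proof. rewrite le_sim, le_minus. tauto. Qed.

Lemma sim_anti a b : le o (sim o b) (sim o a) <-> le o a b.
Proof. rewrite G, ms. tauto. Qed.
Lemma minus_anti a b : le o (minus o b) (minus o a) <-> le o a b.
Proof. rewrite <- G, sm. tauto. Qed.

Definition g a := sim o (sim o a).
Definition h a := minus o (minus o a).

Lemma gh a : g (h a) = a. Proof. unfold g, h. rewrite !sm. auto. Qed.
Lemma hg a : h (g a) = a. Proof. unfold g, h. rewrite !ms. auto. Qed.
Lemma g_mono a b : le o (g a) (g b) <-> le o a b.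
Proof. unfold g. rewrite sim_anti, sim_anti. tauto. Qed.
Lemma h_mono a b : le o (h a) (h b) <-> le o a b.
Proof. unfold h. rewrite minus_anti, minus_anti. tauto. Qed.

Lemma g_meet a b : g (meet o a b) = meet o (g a) (g b).
Proof.
  apply yoneda. intro x. rewrite <- (gh x), !g_mono, le_meet, le_meet, !g_mono. tauto.
Qed.
Lemma h_meet a b : h (meet o a b) = meet o (h a) (h b).
Proof.
  apply yoneda. intro x. rewrite <- (hg x), !h_mono, le_meet, le_meet, !h_mono. tauto.
Qed.

Lemma F1 x y : le o (mul o x y) (zero o) <-> le o (mul o y (g x)) (zero o).
Proof.
  rewrite <- (le_minus y (g x)), <- (le_sim x y). unfold g. rewrite ms. tauto.
Qed.

Lemma eq0 z1 z2 : (forall w, le o (mul o z1 w) (zero o) <-> le o (mul o z2 w) (zero o)) -> z1 = z2.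
Proof.
  intro H. apply le_anti.
  - rewrite <- (ms z2). apply le_minus. apply H. rewrite <- le_minus, ms. apply le_refl.
  - rewrite <- (ms z1). apply le_minus. apply H. rewrite <- le_minus, ms. apply le_refl.
Qed.

Lemma g_mul a b : g (mul o a b) = mul o (g a) (g b).
Proof.
  apply eq0. intro w. rewrite <- (gh w). set (c := h w).
  rewrite <- (F1 c (g (mul o a b))), <- (F1 (mul o a b) c).
  rewrite <- (F1 c (mul o (g a) (g b))), <- mulA, (F1 a (mul o b c)), <- mulA,
    (F1 b (mul o c (g a))), <- mulA. tauto.
Qed.

Lemma h_mul a b : h (mul o a b) = mul o (h a) (h b).
Proof.
  rewrite <- (gh a), <- (gh b), <- g_mul, !hg. reflexivity.
Qed.

Lemma g_sim a : g (sim o a) = sim o (g a). Proof. reflexivity. Qed.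
Lemma g_minus a : g (minus o a) = minus o (g a).
Proof. unfold g. rewrite sm, ms. reflexivity. Qed.
Lemma h_minus a : h (minus o a) = minus o (h a). Proof. reflexivity. Qed.
Lemma h_sim a : h (sim o a) = sim o (h a).
Proof. unfold h. rewrite sm, ms. reflexivity. Qed.

Section Gen.
Variables (f f' : A -> A).
Hypotheses (ff' : forall a, f (f' a) = a)
  (fmeet : forall a b, f (meet o a b) = meet o (f a) (f b))
  (fsim : forall a, f (sim o a) = sim o (f a))
  (fminus : forall a, f (minus o a) = minus o (f a))
  (fmul : forall a b, f (mul o a b) = mul o (f a) (f b)).

Lemma gen (pr p : A -> A) (n : nat) :
  is_qRA o pr -> (forall a, pr (f a) = f' (pr a)) ->
  (forall a, p a = Nat.iter n f (pr a)) -> is_qRA o p.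
Proof.
  intros [_ Q] Hpf Hp. split; [exact HI|]. intros a b.
  assert (Ipr : forall a, pr (Nat.iter n f a) = Nat.iter n f' (pr a)).
  { clear Hp. induction n as [|k IH]; intro x; simpl; auto. rewrite Hpf, IH. reflexivity. }
  assert (Iinv : forall a, Nat.iter n f (Nat.iter n f' a) = a).
  { clear Ipr Hp. induction n as [|k IH]; intro x; simpl; auto.
    rewrite <- (Nat.iter_swap k _ f'), IH. apply ff'. }
  assert (Imeet : forall a b, Nat.iter n f (meet o a b) = meet o (Nat.iter n f a) (Nat.iter n f b)).
  { clear Ipr Iinv Hp. induction n as [|k IH]; intros; simpl; auto. rewrite IH; auto. }
  assert (Isim : forall a, Nat.iter n f (sim o a) = sim o (Nat.iter n f a)).
  { clear Ipr Iinv Hp Imeet. induction n as [|k IH]; intros; simpl; auto. rewrite IH; auto. }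
  assert (Iminus : forall a, Nat.iter n f (minus o a) = minus o (Nat.iter n f a)).
  { clear Ipr Iinv Hp Imeet Isim. induction n as [|k IH]; intros; simpl; auto. rewrite IH; auto. }
  assert (Imul : forall a b, Nat.iter n f (mul o a b) = mul o (Nat.iter n f a) (Nat.iter n f b)).
  { clear Ipr Iinv Hp Imeet Isim Iminus. induction n as [|k IH]; intros; simpl; auto. rewrite IH; auto. }
  destruct (Q a b) as (Q1&Q2&Q3&Q4).
  rewrite !Hp. split; [|split; [|split]].
  - rewrite Ipr, Q1, Iinv. reflexivity.
  - rewrite Q2, Imeet. reflexivity.
  - rewrite Q3, Iminus. reflexivity.
  - rewrite Q4. unfold plus. rewrite Isim, Imul, !Iminus. reflexivity.
Qed.
End Gen.

Lemma iter2 (F : A -> A) n x : Nat.iter (2 * n) F x = Nat.iter n (fun y => F (F y)) x.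
Proof.
  induction n as [|k IH]; auto.
  replace (2 * S k) with (S (S (2 * k))) by lia. rewrite !Nat.iter_succ, IH. reflexivity.
Qed.

End S.

Theorem theorem2p5 (A : Type) (o : FLops A) (pr : A -> A) (n : nat) :
  is_qRA o pr ->
  is_qRA o (tri_down o pr n) /\ is_qRA o (tri_up o pr n).
Proof.
  intro Q. assert (HI : is_InFL o) by apply Q.
  assert (Hg : forall a, pr (g o a) = h o (pr a)).
  { intro a. unfold g, h. destruct Q as [_ Q].
    destruct (Q (sim o a) a) as (_&_&E1&_). destruct (Q a a) as (_&_&E2&_).
    rewrite E1, E2. reflexivity. }
  assert (Hh : forall a, pr (h o a) = g o (pr a)).
  { intro a. destruct Q as [_ Q]. destruct (Q (g o (pr a)) a) as (E&_).
    destruct (Q a a) as (E'&_).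
    rewrite <- E. f_equal. rewrite Hg, E'. reflexivity. }
  split.
  - apply (gen o HI (g o) (h o) (gh o HI) (g_meet o HI) (g_sim o) (g_minus o HI) (g_mul o HI) pr _ n Q Hg).
    intro a. unfold tri_down. rewrite iter2. reflexivity.
  - apply (gen o HI (h o) (g o) (hg o HI) (h_meet o HI) (h_sim o HI) (h_minus o) (h_mul o HI) pr _ n Q Hh).
    intro a. unfold tri_up. rewrite iter2. reflexivity.
Qed.
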